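(* Let $G$ be a periodic group such that the set of primes dividing the orders of elements of $G$ is exactly $\{2,3\}$, for any two elements $g,h\in G$ of orders at most $4$ the order of $gh$ is at most $9$, and the centralizer of every involution of $G$ is a locally cyclic $2$-group. Fix an element $t\in G$ of order $4$, and let $\Theta=\{g^{-1}tg\mid g\in G\}$ and $\Theta^{-}=\{u^{-1}\mid u\in\Theta\}$. Then $\Theta\cap\Theta^{-}=\emptyset$ and $\Theta\cup\Theta^{-}=\Gamma_4(G)$.
   Context: $\Gamma_4(G)$ denotes the set of elements of $G$ of order exactly $4$. *)

(* Defs.v *)
From Stdlib Require List.
From mathcomp Require Import all_boot all_algebra.
Set Implicit Arguments. Unset Strict Implicit. Unset Printing Implicit Defensive.

Section Grp.
Variables (G : Type) (mul : G -> G -> G) (one : G) (inv : G -> G).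

Definition is_group : Prop :=
  [/\ forall x y z, mul x (mul y z) = mul (mul x y) z,
      forall x, mul one x = x, forall x, mul x one = x,
      forall x, mul (inv x) x = one & forall x, mul x (inv x) = one].

Fixpoint gpow (x : G) (n : nat) : G :=
  match n with 0 => one | n'.+1 => mul x (gpow x n') end.

Definition gzpow (x : G) (z : int) : G :=
  match z with Posz n => gpow x n | Negz n => inv (gpow x n.+1) end.

Definition order_is (x : G) (n : nat) : Prop :=
  0 < n /\ gpow x n = one /\ forall m, 0 < m < n -> gpow x m <> one.

Definition periodic : Prop := forall x, exists n, order_is x n.

Inductive gen (S : G -> Prop) : G -> Prop :=
| gen_one : gen S one
| gen_in x : S x -> gen S x
| gen_mul x y : gen S x -> gen S y -> gen S (mul x y)
| gen_inv x : gen S x -> gen S (inv x).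

Definition cyclic_set (H : G -> Prop) : Prop :=
  exists c, H c /\ forall x, H x <-> exists z : int, x = gzpow c z.

Definition locally_cyclic (H : G -> Prop) : Prop :=
  forall l : list G, (forall x, List.In x l -> H x) ->
    cyclic_set (gen (fun x => List.In x l)).

Definition two_group (H : G -> Prop) : Prop :=
  forall x, H x -> exists k, order_is x (2 ^ k).

Definition centralizer (i : G) : G -> Prop := fun x => mul x i = mul i x.

Definition conj_class (t : G) : G -> Prop :=
  fun x => exists g, x = mul (mul (inv g) t) g.
Definition inv_set (S : G -> Prop) : G -> Prop :=
  fun x => exists u, S u /\ x = inv u.

End Grp.

(* Main.v *)
Require Import Defs.
From mathcomp Require Import all_boot all_algebra.
From Stdlib Require Import Classical.
Set Implicit Arguments. Unset Strict Implicit.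

Section S.
Variables (G : Type) (mul : G -> G -> G) (one : G) (inv : G -> G).
Hypothesis HG : is_group mul one inv.
Local Notation gp := (gpow mul one).
Local Notation ord := (order_is mul one).

Lemma mulA x y z : mul x (mul y z) = mul (mul x y) z. Proof. by case: HG. Qed.
Lemma mul1g x : mul one x = x. Proof. by case: HG. Qed.
Lemma mulg1 x : mul x one = x. Proof. by case: HG. Qed.
Lemma mulVg x : mul (inv x) x = one. Proof. by case: HG. Qed.
Lemma mulgV x : mul x (inv x) = one. Proof. by case: HG. Qed.
Lemma mulKg x y : mul (inv x) (mul x y) = y.
Proof. by rewrite mulA mulVg mul1g. Qed.
Lemma mulgK x y : mul (mul y x) (inv x) = y.
Proof. by rewrite -mulA mulgV mulg1. Qed.
Lemma inv_uniq x y : mul x y = one -> y = inv x.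
Proof. by move=> h; rewrite -(mulKg x y) h mulg1. Qed.
Lemma invK x : inv (inv x) = x.
Proof. by rewrite -(inv_uniq (mulVg x)). Qed.
Lemma invM x y : inv (mul x y) = mul (inv y) (inv x).
Proof. symmetry; apply: inv_uniq. by rewrite mulA mulgK mulgV. Qed.
Lemma inv1 : inv one = one.
Proof. by rewrite -(inv_uniq (mul1g one)). Qed.

Lemma gpow_add x m n : gp x (m + n) = mul (gp x m) (gp x n).
Proof. elim: m => [|m IH] /=; first by rewrite mul1g. by rewrite IH mulA. Qed.
Lemma gpow1 x : gp x 1 = x. Proof. by rewrite /= mulg1. Qed.
Lemma gpowS x n : gp x n.+1 = mul (gp x n) x.
Proof. by rewrite -addn1 gpow_add gpow1. Qed.
Lemma gpow_comm x m n : mul (gp x m) (gp x n) = mul (gp x n) (gp x m).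
Proof. by rewrite -!gpow_add addnC. Qed.
Lemma gpow_inter a x y n : mul a x = mul y a -> mul a (gp x n) = mul (gp y n) a.
Proof.
move=> h; elim: n => [|n IH] /=; first by rewrite mul1g mulg1.
by rewrite mulA h -mulA IH mulA.
Qed.
Lemma gpow_inv x n : gp (inv x) n = inv (gp x n).
Proof.
elim: n => [|n IH] /=; first by rewrite inv1.
by rewrite IH -[mul x _]/(gp x n.+1) gpowS invM.
Qed.
Lemma gpow_mul x m n : gp x (m * n) = gp (gp x m) n.
Proof. elim: n => [|n IH]; first by rewrite muln0. by rewrite mulnS gpow_add IH. Qed.

Definition cj h x := mul (mul (inv h) x) h.
Lemma cjM h x y : cj h (mul x y) = mul (cj h x) (cj h y).
Proof. by rewrite /cj -!mulA mulA (mulA h) mulgV mul1g !mulA. Qed.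
Lemma cj1 h : cj h one = one.
Proof. by rewrite /cj mulg1 mulVg. Qed.
Lemma gpow_cj h x n : gp (cj h x) n = cj h (gp x n).
Proof. elim: n => [|n IH] /=; first by rewrite cj1. by rewrite IH cjM. Qed.
Lemma cj_inv h x : cj h (inv x) = inv (cj h x).
Proof. by rewrite /cj !invM invK mulA. Qed.
Lemma cj_comp a b x : cj a (cj b x) = cj (mul b a) x.
Proof. by rewrite /cj invM -!mulA. Qed.
Lemma cj_id x : cj one x = x.
Proof. by rewrite /cj inv1 mul1g mulg1. Qed.
Lemma cjK g x : cj g (cj (inv g) x) = x.
Proof. by rewrite cj_comp mulVg cj_id. Qed.
Lemma cj_inj h x y : cj h x = cj h y -> x = y.
Proof. by move=> /(congr1 (cj (inv h))); rewrite !cj_comp mulgV !cj_id. Qed.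
Lemma order_cj h x n : ord x n -> ord (cj h x) n.
Proof.
case=> [n0 [e1 e2]]; split=> //; split; first by rewrite gpow_cj e1 cj1.
move=> m hm e; apply: (e2 m hm); apply: (@cj_inj h); by rewrite cj1 -gpow_cj.
Qed.
Lemma order_inv x n : ord x n -> ord (inv x) n.
Proof.
case=> [n0 [e1 e2]]; split=> //; split; first by rewrite gpow_inv e1 inv1.
move=> m hm; rewrite gpow_inv => e; apply: (e2 m hm).
by rewrite -(invK (gp x m)) e inv1.
Qed.

Lemma comm_inv x y : mul x y = mul y x -> mul (inv x) y = mul y (inv x).
Proof.
move=> h.
by rewrite -[mul (inv x) y]mulg1 -(mulgV x) mulA -(mulA (inv x) y x) -h mulA mulVg mul1g.
Qed.
Lemma gzpow_comm c z1 z2 :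
  mul (gzpow mul one inv c z1) (gzpow mul one inv c z2) =
  mul (gzpow mul one inv c z2) (gzpow mul one inv c z1).
Proof.
case: z1 => n1; case: z2 => n2; rewrite /gzpow.
- exact: gpow_comm.
- symmetry; exact: comm_inv (gpow_comm _ _ _).
- exact: comm_inv (gpow_comm _ _ _).
- by rewrite -!invM gpow_comm.
Qed.

Lemma lc_comm H a b : locally_cyclic mul one inv H -> H a -> H b -> mul a b = mul b a.
Proof.
move=> hl ha hb.
have [c [_ hc]] := hl [:: a; b] ltac:(by move=> x /= [<-|[<-|[]]]).
have [z1 ->] : exists z, a = gzpow mul one inv c z by apply/hc; apply: gen_in; left.
have [z2 ->] : exists z, b = gzpow mul one inv c z by apply/hc; apply: gen_in; right; left.
exact: gzpow_comm.
Qed.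

Lemma lc_invol H a b : locally_cyclic mul one inv H -> H a -> H b ->
  mul a a = one -> a <> one -> mul b b = one -> b <> one -> a = b.
Proof.
move=> hl ha hb aa a1 bb b1.
have ab := lc_comm hl ha hb.
have [c [hc0 hc]] := hl [:: a; b] ltac:(by move=> x /= [<-|[<-|[]]]).
pose P x := x = one \/ x = a \/ x = b \/ x = mul a b.
have e1 : mul a (mul a b) = b by rewrite mulA aa mul1g.
have e2 : mul b (mul a b) = a by rewrite ab mulA bb mul1g.
have e4 : mul (mul a b) a = b by rewrite ab -mulA aa mulg1.
have e5 : mul (mul a b) b = a by rewrite -mulA bb mulg1.
have e6 : mul (mul a b) (mul a b) = one by rewrite -mulA e2 aa.
have PG x : gen mul one inv (fun x => List.In x [:: a; b]) x -> P x.
  elim => [|y /= [<-|[<-|[]]]|y w _ [->|[->|[->|->]]] _ [->|[->|[->|->]]]|y _ [->|[->|[->|->]]]];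
  rewrite ?mul1g ?mulg1 ?aa ?bb ?e1 ?e2 ?e4 ?e5 ?e6 -?ab ?inv1;
  try by [left | right; left | right; right; left | right; right; right].
  - by rewrite -(inv_uniq aa); right; left.
  - by rewrite -(inv_uniq bb); right; right; left.
  - by rewrite -(inv_uniq e6); right; right; right.
have cc : mul c c = one.
  by case: (PG _ hc0) => [->|[->|[->|->]]]; rewrite ?mul1g.
have R m : gp c m = one \/ gp c m = c.
  elim: m => [|m IH] /=; first by left.
  by case: IH => ->; [rewrite mulg1; right | rewrite cc; left].
have Q x : gen mul one inv (fun x => List.In x [:: a; b]) x -> x = one \/ x = c.
  move=> /hc [[n|n] ->]; rewrite /gzpow; first exact: R.
  by case: (R n.+1) => ->; [rewrite inv1; left | rewrite -(inv_uniq cc); right].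
have [//|->] : a = one \/ a = c by apply: Q; apply: gen_in; left.
by have [//|->] : b = one \/ b = c by apply: Q; apply: gen_in; right; left.
Qed.

Lemma ord2 x : ord x 2 <-> mul x x = one /\ x <> one.
Proof.
split.
- case=> _ [e h]; split; first by move: e; rewrite /= mulg1.
  by move=> e1; apply: (h 1) => //; rewrite gpow1.
- case=> e h; split=> //; split; first by rewrite /= mulg1.
  by case=> [|[|m]] // _; rewrite gpow1.
Qed.

Lemma invol_conj i j k :
  (forall z, ord z 2 -> locally_cyclic mul one inv (centralizer mul z)) ->
  ord i 2 -> ord j 2 -> ord (mul i j) k -> exists g, cj g i = j.
Proof.
move=> Hc /ord2 [ii i1] /ord2 [jj j1] [k0 [wk wmin]].
set w := mul i j. set v := mul j i.
have iw : mul i w = mul v i by rewrite /w /v mulA ii mul1g -mulA ii mulg1.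
have jw : mul j w = mul v j by rewrite /w /v mulA.
have vw : mul v w = one by rewrite /v /w -mulA (mulA i) ii mul1g jj.
have gv n : gp v n = inv (gp w n).
  by rewrite (inv_uniq vw) gpow_inv invK.
have kk := odd_double_half k.
set m := k./2 in kk.
case: (odd k) kk => kk.
- exists (gp w m.+1).
  have hwm : mul (gp w m) (gp w m.+1) = one.
    have e : m + m.+1 = k by rewrite -kk -addnn addnS.
    by rewrite -gpow_add e.
  have ia : inv (gp w m.+1) = gp w m by rewrite (inv_uniq hwm) invK.
  rewrite /cj ia -mulA (gpow_inter _ iw) gpowS gv.
  by rewrite !mulA mulgV mul1g /v -mulA ii mulg1.
- have k2 : k = m + m by rewrite -kk add0n addnn.
  have m0 : 0 < m by move: k0; rewrite k2; case: (m).
  set z := gp w m.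
  have zz : mul z z = one by rewrite -gpow_add -k2.
  have z1 : z <> one by apply: wmin; rewrite m0 k2 /= -{1}(add0n m) ltn_add2r.
  have iz : mul i z = mul z i.
    by rewrite /z (gpow_inter _ iw) gv -(inv_uniq zz).
  have jz : mul j z = mul z j.
    by rewrite /z (gpow_inter _ jw) gv -(inv_uniq zz).
  have hz : ord z 2 by apply/ord2.
  have e1 : i = z by apply: (lc_invol (Hc z hz)) => //; rewrite /centralizer.
  have e2 : j = z by apply: (lc_invol (Hc z hz)) => //; rewrite /centralizer.
  by exists one; rewrite cj_id e1 e2.
Qed.

Lemma main_thm
  (H49 : forall (g h : G) (m n : nat),
     ord g m -> (m <= 4)%N -> ord h n -> (n <= 4)%N ->
     exists k, ord (mul g h) k /\ (k <= 9)%N)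
  (Hcent : forall i : G, ord i 2 ->
     two_group mul one (centralizer mul i) /\
     locally_cyclic mul one inv (centralizer mul i))
  (t : G) (Ht : ord t 4) :
  (forall x, ~ (conj_class mul inv t x /\ inv_set inv (conj_class mul inv t) x)) /\
  (forall x, (conj_class mul inv t x \/ inv_set inv (conj_class mul inv t) x)
             <-> ord x 4).
Proof.
have Hc z : ord z 2 -> locally_cyclic mul one inv (centralizer mul z).
  by move=> /Hcent [].
set i := mul t t.
have ii : mul i i = one.
  by case: Ht => _ [e _]; move: e; rewrite /= mulg1 /i !mulA.
have i1 : i <> one.
  by case: Ht => _ [_ h] e; apply: (h 2) => //; rewrite /= mulg1.
have hi : ord i 2 by apply/ord2.
have ti : mul t i = mul i t by rewrite /i mulA.
have invi : inv i = i by rewrite -(inv_uniq ii).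
split.
- move=> x [[g ->] [u [[h ->] e]]].
  have e' : cj g t = cj h (inv t) by rewrite cj_inv.
  have es : cj (mul g (inv h)) t = inv t.
    move: (congr1 (cj (inv h)) e'); rewrite !cj_comp mulgV cj_id => <-.
    by [].
  set s := mul g (inv h) in es.
  have si : cj s i = i by rewrite /i cjM es -invM.
  have si' : mul s i = mul i s.
    by move: (congr1 (mul s) si); rewrite /cj !mulA mulgV mul1g => ->.
  have st : mul s t = mul t s.
    by apply: (lc_comm (Hc i hi)); rewrite /centralizer.
  have tt : t = inv t by rewrite -es /cj -mulA -st mulA mulVg mul1g.
  by apply: i1; rewrite /i {2}tt mulgV.
- move=> x; split.
  + case=> [[g ->]|[u [[g ->] ->]]]; first exact: order_cj.
    exact/order_inv/order_cj.
  + move=> hx.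
    have hj : ord (mul x x) 2.
      apply/ord2; split.
        by case: hx => _ [e _]; move: e; rewrite /= mulg1 !mulA.
      by case: hx => _ [_ h] e; apply: (h 2) => //; rewrite /= mulg1.
    have [k [hk _]] := H49 _ _ _ _ hi isT hj isT.
    have [g eg] := invol_conj Hc hi hj hk.
    set y := cj (inv g) x.
    have hy : ord y 4 by exact: order_cj.
    have yy : mul y y = i by rewrite /y -cjM -eg cj_comp mulgV cj_id.
    have hx' : x = cj g y by rewrite /y cjK.
    clearbody y.
    have yi : mul y i = mul i y by rewrite -yy mulA.
    have yt : mul t y = mul y t.
      by apply: (lc_comm (Hc i hi)); rewrite /centralizer.
    have ity : mul (inv t) y = mul y (inv t) by exact: comm_inv.
    have iti : mul (inv t) i = mul i (inv t) by exact: comm_inv.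
    set u := mul y (inv t).
    have uu : mul u u = one.
      rewrite /u -mulA (mulA (inv t)) ity -!mulA. by rewrite mulA yy -invM invi ii.
    have ui : mul u i = mul i u.
      by rewrite /u -mulA iti mulA yi -mulA.
    have [u1|u1] := classic (u = one).
    * left; exists g. rewrite hx'.
      by rewrite -(invK y) -(inv_uniq u1) invK.
    * have ue : u = i by apply: (lc_invol (Hc i hi)) => //; rewrite /centralizer.
      have ey : y = inv t.
        have : y = mul i t by rewrite -ue /u -mulA mulVg mulg1.
        move=> ->; apply: inv_uniq.
        by rewrite /i !mulA; case: Ht => _ [e _]; move: e; rewrite /= mulg1 !mulA.
      right; exists (cj g t); split; first by exists g.
      by rewrite hx' ey cj_inv.
Qed.
End S.

Theorem lemma5 (G : Type) (mul : G -> G -> G) (one : G) (inv : G -> G)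
  (HG : is_group mul one inv)
  (Hper : periodic mul one)
  (Hprimes : forall p : nat, prime p ->
     ((exists (g : G) (n : nat), order_is mul one g n /\ (p %| n)%N) <->
      (p = 2 \/ p = 3)))
  (H49 : forall (g h : G) (m n : nat),
     order_is mul one g m -> (m <= 4)%N ->
     order_is mul one h n -> (n <= 4)%N ->
     exists k, order_is mul one (mul g h) k /\ (k <= 9)%N)
  (Hcent : forall i : G, order_is mul one i 2 ->
     two_group mul one (centralizer mul i) /\
     locally_cyclic mul one inv (centralizer mul i))
  (t : G) (Ht : order_is mul one t 4) :
  (forall x, ~ (conj_class mul inv t x /\ inv_set inv (conj_class mul inv t) x)) /\
  (forall x, (conj_class mul inv t x \/ inv_set inv (conj_class mul inv t) x)
             <-> order_is mul one x 4).
Proof. exact: (main_thm HG H49 Hcent Ht). Qed.
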